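(* Let $G$ be a bipartite simple graph with stable sets $X$ and $Y$, suppose $G\cong H_1\oplus H_2$ is a decomposition of $G$, and let $n\ge1$. If $G$ is edge-magic (respectively, super edge-magic), then $S_{2n}(G;H_1,H_2)$ is edge-magic (respectively, super edge-magic).
   Context: For a $(p,q)$-graph $G$ ($p$ vertices, $q$ edges), an edge-magic labeling is a bijection $f:V(G)\cup E(G)\to[1,p+q]$ such that $f(x)+f(xy)+f(y)$ is constant for every edge $xy$; it is super edge-magic if moreover $f(V(G))=[1,p]$. A decomposition $G\cong H_1\oplus H_2$ means $H_1,H_2$ are subgraphs of $G$ whose edge sets partition $E(G)$. Writing $X=\{x_i\}_{i=1}^s$, $Y=\{y_j\}_{j=1}^t$, $S_{2n}(G;H_1,H_2)$ is the graph with vertex set $X\cup Y\cup\bigcup_{k=1}^n X_k\cup\bigcup_{k=1}^n Y_k$, where $X_k=\{x_i^k\}_{i=1}^s$, $Y_k=\{y_j^k\}_{j=1}^t$ are new vertices, and edge set $E(G)\cup\{x_iy_j^k: x_iy_j\in E(H_1),\,k\in[1,n]\}\cup\{x_i^ky_j: x_iy_j\in E(H_2),\,k\in[1,n]\}$. *)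

(* Defs.v *)
From mathcomp Require Import all_boot.
Set Implicit Arguments. Unset Strict Implicit. Unset Printing Implicit Defensive.

(* A finite simple graph is given by a vertex finType T and an adjacency
   relation e (assumed symmetric, irreflexive where used). Its edge set is the
   set of unordered pairs {x,y} with e x y. *)
Definition graph_edges (T : finType) (e : rel T) : {set {set T}} :=
  [set [set x; y] | x in T, y in T & e x y].

(* Labels of vertices and edges are packaged in one function on T + {set T};
   the domain of the labeling is V(G) (inl) together with E(G) (inr). *)
Definition lab_dom (T : finType) (e : rel T) : pred (T + {set T}) :=
  fun z => match z with inl _ => true | inr E => E \in graph_edges e end.

Definition is_total_labeling (T : finType) (e : rel T) (f : T + {set T} -> nat) :=
  let p := #|T| in let q := #|graph_edges e| in
  [/\ {in lab_dom e &, injective f},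
      (forall z, lab_dom e z -> 1 <= f z <= p + q) &
      (forall k, 1 <= k <= p + q -> exists2 z, lab_dom e z & f z = k)].

Definition edge_magic_labeling (T : finType) (e : rel T) (f : T + {set T} -> nat) :=
  is_total_labeling e f /\
  exists c : nat, forall x y, e x y -> f (inl x) + f (inr [set x; y]) + f (inl y) = c.

Definition edge_magic (T : finType) (e : rel T) :=
  exists f, edge_magic_labeling e f.

Definition super_edge_magic (T : finType) (e : rel T) :=
  exists f, edge_magic_labeling e f /\ (forall x : T, f (inl x) <= #|T|).

(* Bipartite graph G with stable sets X = {x_i}_{i<s} (inl) and
   Y = {y_j}_{j<t} (inr); x_i y_j is an edge iff E i j. *)
Definition bip_rel (s t : nat) (E : 'I_s -> 'I_t -> bool) : rel ('I_s + 'I_t) :=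
  fun u v => match u, v with
             | inl i, inr j => E i j
             | inr j, inl i => E i j
             | _, _ => false
             end.

(* Vertex set of S_{2n}(G;H1,H2):
   inl (inl i) = x_i, inl (inr j) = y_j,
   inr (inl (i,k)) = x_i^k, inr (inr (j,k)) = y_j^k  (copy index k : 'I_n). *)
Definition S2n_vert (s t n : nat) : finType :=
  (('I_s + 'I_t) + (('I_s * 'I_n) + ('I_t * 'I_n)))%type.

Definition S2n_adj (s t n : nat) (E E1 E2 : 'I_s -> 'I_t -> bool)
  (u v : S2n_vert s t n) : bool :=
  match u, v with
  | inl (inl i), inl (inr j) => E i j
  | inl (inl i), inr (inr (j, _)) => E1 i j          (* x_i y_j^k, x_iy_j in H1 *)
  | inr (inl (i, _)), inl (inr j) => E2 i j          (* x_i^k y_j, x_iy_j in H2 *)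
  | _, _ => false
  end.

Definition S2n {s t : nat} (n : nat) (E E1 E2 : 'I_s -> 'I_t -> bool) : rel (S2n_vert s t n) :=
  fun u v => S2n_adj E E1 E2 u v || S2n_adj E E1 E2 v u.
Arguments S2n {s t} n E E1 E2 _ _.

(* Main.v *)
Require Import Defs.
From mathcomp Require Import all_boot.
From mathcomp Require Import zify.
From Stdlib Require Import Lia.
Set Implicit Arguments. Unset Strict Implicit. Unset Printing Implicit Defensive.

Lemma divmod_uniq L a1 a2 r1 r2 : L*a1 + r1 = L*a2+r2 -> r1 < L -> r2 < L -> a1 = a2 /\ r1 = r2.
Proof.
move=> H H1 H2.
have L0 : 0 < L by apply: leq_ltn_trans H1.
have := congr1 (fun x => x %/ L) H; have := congr1 (fun x => x %% L) H => /=.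
rewrite ![L * _]mulnC !modnMDl !divnMDl // !modn_small // !divn_small //.
by rewrite !addn0 => -> ->.
Qed.

Lemma edgesP (T : finType) (e : rel T) S :
  reflect (exists x y, e x y /\ S = [set x; y]) (S \in graph_edges e).
Proof.
apply: (iffP idP).
  by case/imset2P => x y _; rewrite inE => Hxy ->; exists x, y.
by case=> x [y [Hxy ->]]; apply/imset2P; exists x y => //; rewrite inE.
Qed.

Lemma card_lab_dom (T : finType) (e : rel T) :
  #|lab_dom e| = #|T| + #|graph_edges e|.
Proof.
have -> : #|lab_dom e| = #|[set inl x | x : T] :|: [set inr S | S in graph_edges e]|.
  apply: eq_card => z; rewrite in_setU; case: z => [x|S] /=.
    by apply/esym/orP; left; apply/imsetP; exists x.
  apply/esym; apply/orP/idP => [[]|H].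
  - by case/imsetP.
  - by case/imsetP => S' HS [->].
  by right; apply/imsetP; exists S.
rewrite cardsU.
have -> : #|[set inl x | x : T] :&: [set inr S | S in graph_edges e]| = 0.
  apply/eqP; rewrite cards_eq0; apply/eqP/setP => z; rewrite !inE.
  by apply/andP => -[/imsetP [x _ ->] /imsetP [y _]].
rewrite subn0.
rewrite !card_in_imset.
- by [].
- by move=> ?? _ _ [].
- by move=> ?? _ _ [].
Qed.

Lemma total_of_bij (T : finType) (e : rel T) (g : T + {set T} -> nat) N :
  {in lab_dom e &, injective g} ->
  (forall z, lab_dom e z -> 1 <= g z <= N) ->
  (forall k, 1 <= k <= N -> exists2 z, lab_dom e z & g z = k) ->
  #|T| + #|graph_edges e| = N /\ is_total_labeling e g.
Proof.
move=> Hinj Hr Hs.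
have HN : #|T| + #|graph_edges e| = N.
  rewrite -card_lab_dom cardE -(size_map g) -(size_iota 1 N).
  apply: perm_size; apply: uniq_perm.
  - rewrite map_inj_in_uniq ?enum_uniq //.
    by move=> x y; rewrite !mem_enum; apply: Hinj.
  - exact: iota_uniq.
  move=> k; rewrite mem_iota; apply/mapP/idP.
    by case=> z; rewrite mem_enum => /Hr; move=> H ->; lia.
  move=> Hk; have [|z Hz Hzk] := Hs k; first by lia.
  by exists z; rewrite ?mem_enum.
split => //; split => //; rewrite HN //.
Qed.

Section Constr.
Variables (s t n : nat) (E E1 E2 : 'I_s -> 'I_t -> bool).
Hypothesis Hpart : forall i j, E i j = E1 i j || E2 i j.
Hypothesis Hdisj : forall i j, ~~ (E1 i j && E2 i j).
Local Notation V := (S2n_vert s t n).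
Local Notation G := (bip_rel E).
Local Notation G' := (S2n n E E1 E2).

Definition pr (v : V) : 'I_s + 'I_t :=
  match v with inl w => w | inr (inl (i, _)) => inl i | inr (inr (j, _)) => inr j end.
Definition rk (v : V) : nat :=
  match v with inl _ => 0 | inr (inl (_, k)) => k.+1 | inr (inr (_, k)) => k.+1 end.
Definition phi (z : V + {set V}) : ('I_s + 'I_t) + {set ('I_s + 'I_t)} :=
  match z with inl v => inl (pr v) | inr Sx => inr (pr @: Sx) end.
Definition RR (z : V + {set V}) : nat :=
  match z with inl v => rk v | inr Sx => n - \sum_(u in Sx) rk u end.
Definition gl (f : ('I_s + 'I_t) + {set ('I_s + 'I_t)} -> nat) z :=
  n.+1 * (f (phi z)).-1 + RR z + 1.

Lemma rk_le v : rk v <= n.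
Proof. by case: v => [?|[[? k]|[? k]]] /=. Qed.

Lemma edge_pair x y : G' x y ->
  [/\ x != y, G (pr x) (pr y) & (rk x == 0) || (rk y == 0)].
Proof.
rewrite /S2n.
case: x => [[i|j]|[[i k]|[j k]]]; case: y => [[i'|j']|[[i' k']|[j' k']]] //=;
  rewrite ?orbF ?Hpart => H; split => //; rewrite ?H ?orbT //.
Qed.

Lemma imset_set2 (A B : finType) (h : A -> B) a b : h @: [set a; b] = [set h a; h b].
Proof. by rewrite imsetU1 imset_set1. Qed.

Lemma sum2 x y : x != y -> \sum_(u in [set x; y]) rk u = rk x + rk y.
Proof. by move=> H; rewrite big_setU1 ?big_set1 // inE. Qed.

Lemma gl_edge f x y : x != y ->
  gl f (inr [set x; y]) = n.+1 * (f (inr [set pr x; pr y])).-1 + (n - (rk x + rk y)) + 1.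
Proof. by move=> H; rewrite /gl /= imset_set2 sum2. Qed.

Lemma phi_dom z : lab_dom G' z -> lab_dom G (phi z).
Proof.
case: z => //= Sx /edgesP [x [y [Hxy ->]]]; rewrite imset_set2.
by case/edge_pair: Hxy => _ H _; apply/edgesP; exists (pr x), (pr y).
Qed.

Lemma RR_le z : lab_dom G' z -> RR z <= n.
Proof. by case: z => [v|Sx] /= _; rewrite ?rk_le ?leq_subr. Qed.

Lemma edge_cases Sx : Sx \in graph_edges G' -> exists i j,
  (Sx = [set inl (inl i); inl (inr j)] /\ E i j) \/
  (exists k, Sx = [set inl (inl i); inr (inr (j, k))] /\ E1 i j) \/
  (exists k, Sx = [set inr (inl (i, k)); inl (inr j)] /\ E2 i j).
Proof.
case/edgesP => x [y [Hxy ->]]; move: Hxy; rewrite /S2n.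
case: x => [[i|j]|[[i k]|[j k]]]; case: y => [[i'|j']|[[i' k']|[j' k']]] //=;
  rewrite ?orbF => H; do 2 eexists;
  first [ by left; split; [reflexivity|]
        | by right; left; eexists; split; [reflexivity|]
        | by right; right; eexists; split; [reflexivity|]
        | by left; split; [apply: setUC|]
        | by right; left; eexists; split; [apply: setUC|]
        | by right; right; eexists; split; [apply: setUC|] ].
Qed.


Lemma card_V : #|V| = n.+1 * (s + t).
Proof. rewrite /S2n_vert !card_sum !card_prod !card_ord; lia. Qed.

Lemma pr_inj (v1 v2 : V) : pr v1 = pr v2 -> rk v1 = rk v2 -> v1 = v2.
Proof.
case: v1 => [[i|j]|[[i k]|[j k]]]; case: v2 => [[i'|j']|[[i' k']|[j' k']]] /= Hp Hr;
 try discriminate; case: Hp => ?; subst => //; case: Hr => /ord_inj -> //.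
Qed.

Lemma set2_eq i1 j1 i2 j2 :
  [set inl i1; inr j1] = [set inl i2; inr j2] :> {set ('I_s + 'I_t)%type} -> i1 = i2 /\ j1 = j2.
Proof.
move=> H.
have : inl i1 \in [set inl i2; inr j2] by rewrite -H set21.
have : inr j1 \in [set inl i2; inr j2] by rewrite -H set22.
rewrite !in_set2 => /orP [/eqP //|/eqP [->]] /orP [/eqP [->]|/eqP //] //.
Qed.

Lemma exists_vert w r : r <= n -> exists v : V, pr v = w /\ rk v = r.
Proof.
case: r => [|r] Hr; first by exists (inl w).
case: w => [i|j]; first by exists (inr (inl (i, Ordinal Hr))).
by exists (inr (inr (j, Ordinal Hr))).
Qed.

Lemma exists_edge i j r : E i j -> r <= n -> exists2 Sy, Sy \in graph_edges G' &
  phi (inr Sy) = inr [set inl i; inr j] /\ RR (inr Sy) = r.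
Proof.
move=> Hij Hr.
have [Hlt|Hge] := ltnP r n; last first.
  have -> : r = n by lia.
  exists [set inl (inl i); inl (inr j)].
    by apply/edgesP; do 2 eexists; split; last reflexivity; rewrite /S2n /= Hij.
  by rewrite /= imset_set2 sum2 //= subn0.
have Hk : n - r.+1 < n by lia.
move: Hij; rewrite Hpart => /orP [H1|H2].
  exists [set inl (inl i); inr (inr (j, Ordinal Hk))].
    by apply/edgesP; do 2 eexists; split; last reflexivity; rewrite /S2n /= H1.
  rewrite /= imset_set2 sum2 //=; split => //; lia.
exists [set inr (inl (i, Ordinal Hk)); inl (inr j)].
  by apply/edgesP; do 2 eexists; split; last reflexivity; rewrite /S2n /= H2.
rewrite /= imset_set2 sum2 //=; split => //; lia.
Qed.

Lemma main f : edge_magic_labeling G f -> edge_magic_labeling G' (gl f).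
Proof.
case=> [[finj frng fsur] [c Hc]].
move: fsur frng; set N := (_ + #|graph_edges G|) => fsur frng.
have fpos z : lab_dom G z -> 0 < f z by move/frng => /andP [].
have [HN Htot] : #|V| + #|graph_edges G'| = n.+1 * N /\ is_total_labeling G' (gl f).
  apply: total_of_bij.
  - move=> z1 z2 H1 H2; rewrite /gl => /eqP; rewrite eqn_add2r => /eqP.
    move/divmod_uniq => /(_ (RR_le H1)) /(_ (RR_le H2)) [Ha Hr].
    have Hf : f (phi z1) = f (phi z2).
      by rewrite -(prednK (fpos _ (phi_dom H1))) -(prednK (fpos _ (phi_dom H2))) Ha.
    have := finj _ _ (phi_dom H1) (phi_dom H2) Hf.
    clear Ha Hf; move: Hr H1 H2; case: z1 => [v1|S1]; case: z2 => [v2|S2] //=.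
    + by move=> Hr _ _ [Hp]; rewrite (pr_inj Hp Hr).
    move=> Hr H1 H2 [Hp].
    move: Hr Hp.
    case/edge_cases: H1 => i1 [j1 [[-> e1]|[[k1 [-> e1]]|[k1 [-> e1]]]]];
    case/edge_cases: H2 => i2 [j2 [[-> e2]|[[k2 [-> e2]]|[k2 [-> e2]]]]];
    rewrite !imset_set2 /= !sum2 //= => Hr /set2_eq [? ?]; subst i1 j1 => //;
    try (have := ltn_ord k1); try (have := ltn_ord k2); intros; try lia;
    try (by move: (Hdisj i2 j2); rewrite e1 e2).
    1-2: by rewrite (_ : k1 = k2) //; apply: ord_inj; lia.
  - move=> z Hz; have := frng _ (phi_dom Hz); have := RR_le Hz.
    rewrite /gl; set a := f (phi z); set r := RR z => Hr /andP [Ha1 HaN].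
    have e1 : n.+1 * a.-1 + n.+1 = n.+1 * a by rewrite -[in RHS](prednK Ha1) mulnS addnC.
    have e2 : n.+1 * a <= n.+1 * N by rewrite leq_mul2l HaN orbT.
    move: e1 e2; generalize (n.+1 * a.-1) (n.+1 * a) (n.+1 * N); intros; lia.
  - move=> k /andP [Hk1 HkN].
    have Hm : k.-1 = k.-1 %/ n.+1 * n.+1 + k.-1 %% n.+1 := divn_eq _ _.
    have Ha : k.-1 %/ n.+1 < N by rewrite ltn_divLR // mulnC; lia.
    have Hr : k.-1 %% n.+1 <= n by rewrite -ltnS ltn_mod.
    have [|z Hz Hfz] := fsur (k.-1 %/ n.+1).+1; first by rewrite /= Ha.
    case: z Hz Hfz => [w|Sx] Hz Hfz.
      have [v [Hv1 Hv2]] := exists_vert w Hr.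
      exists (inl v) => //; rewrite /gl /= Hv1 Hv2 Hfz /=; lia.
    case/edgesP: Hz => x [y [Hxy HSx]].
    have [i [j [Hij HS]]] : exists i j, E i j /\ Sx = [set inl i; inr j].
      move: Hxy HSx; case: x => [i|j]; case: y => [i'|j'] //= H ->.
        by exists i, j'.
      by exists i', j; rewrite setUC.
    have [Sy HSy [Hp HR]] := exists_edge Hij Hr.
    exists (inr Sy) => //; rewrite /gl Hp HR -HS Hfz /=; lia.
split=> //.
exists (n.+1 * (c - 3) + n + 3) => x y Hxy.
have [Hne HG Hrk] := edge_pair Hxy.
rewrite gl_edge // /gl /=.
have := Hc _ _ HG.
have := fpos (inl (pr x)) isT; have := fpos (inl (pr y)) isT.
have HBd : [set pr x; pr y] \in graph_edges G by apply/edgesP; exists (pr x), (pr y).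
have := fpos (inr [set pr x; pr y]) HBd.
have := rk_le x; have := rk_le y.
set A := f (inl (pr x)); set B := f (inr [set pr x; pr y]); set C := f (inl (pr y)).
move=> Hy Hx HB HC HA Hsum.
have e : n.+1 * (c - 3) = n.+1 * A.-1 + n.+1 * B.-1 + n.+1 * C.-1.
  by rewrite -!mulnDr; congr (_ * _); lia.
rewrite e; move: Hrk; set a := n.+1 * A.-1; set b := n.+1 * B.-1; set cc := n.+1 * C.-1.
lia.
Qed.

End Constr.

Theorem mainTheorem9 (s t n : nat) (E E1 E2 : 'I_s -> 'I_t -> bool)
  (Hpart : forall i j, E i j = E1 i j || E2 i j)
  (Hdisj : forall i j, ~~ (E1 i j && E2 i j))
  (Hn : 1 <= n) :
  (edge_magic (bip_rel E) -> edge_magic (S2n n E E1 E2)) /\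
  (super_edge_magic (bip_rel E) -> super_edge_magic (S2n n E E1 E2)).
Proof.
split.
  by case=> f Hf; exists (gl f); apply: main.
case=> f [Hf Hsup]; exists (gl f); split; first exact: main.
move=> v; rewrite card_V /gl /=.
have := Hsup (pr v); have := rk_le v.
have : 0 < f (inl (pr v)) by case: Hf => [[_ H _] _]; case/andP: (H (inl (pr v)) isT).
set a := f (inl (pr v)); set p := #|_| => Ha1 Hr Hap.
have ep : p = s + t by rewrite /p card_sum !card_ord.
rewrite -ep.
have e1 : n.+1 * a.-1 + n.+1 = n.+1 * a by rewrite -[in RHS](prednK Ha1) mulnS addnC.
have e2 : n.+1 * a <= n.+1 * p by rewrite leq_mul2l Hap orbT.
move: e1 e2; generalize (n.+1 * a.-1) (n.+1 * a) (n.+1 * p); intros; lia.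
Qed.
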